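(* Let $T(n) = (3n+1)/2^{v_2(3n+1)}$ for odd $n \ge 1$. For an odd positive integer $n \equiv 1 \pmod 4$, say that $n$ produces $(L,G) = (1,1)$ if $T(n) \equiv 3 \pmod 4$ and $T(T(n)) \equiv 1 \pmod 4$. For $n_0 = 64a + r$ with integer $a \ge 0$ and $r \in \{5,13,21,29,37,45,53,61\}$: (a) if $r = 29$, then $n_0$ produces $(L,G)=(1,1)$ for every $a$; (b) if $r = 21$, then $n_0$ produces $(L,G)=(1,1)$ if and only if $\mathrm{oddpart}(3a+1) \equiv 3 \pmod 8$; (c) if $r = 37$, then $n_0$ produces $(L,G)=(1,1)$ if and only if $a$ is odd; (d) if $r = 53$, then $n_0$ produces $(L,G)=(1,1)$ if and only if $a \equiv 1 \pmod 4$; (e) if $r \in \{5,13,45,61\}$, then $n_0$ does not produce $(L,G)=(1,1)$ for any $a$.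
   Context: $v_2$ is the $2$-adic valuation and $\mathrm{oddpart}(x) = x/2^{v_2(x)}$ for a positive integer $x$. In terms of the orbit $n_0, T(n_0), T^2(n_0),\dots$ with burst indicator $X_t = \mathbf{1}[n_t\equiv 1 \pmod 4]$, $(L,G)=(1,1)$ means the burst run starting at $n_0$ has length $L=1$ and the following gap run has length $G=1$. *)

(* Defs.v *)
From mathcomp Require Import all_boot.

Definition v2 (x : nat) : nat := logn 2 x.

Definition oddpart (x : nat) : nat := x %/ 2 ^ v2 x.

Definition T (n : nat) : nat := oddpart (3 * n + 1).

Definition produces11 (n : nat) : Prop :=
  T n %% 4 = 3 /\ T (T n) %% 4 = 1.

(* Main.v *)
Require Import Defs.
From mathcomp Require Import all_boot.
From mathcomp Require Import zify.

Lemma oddpartE k m : odd m -> oddpart (2^k * m) = m.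
Proof.
move=> om; have m0 : 0 < m by case: m om.
rewrite /oddpart /v2 lognM ?expn_gt0 // pfactorK //.
have -> : logn 2 m = 0 by apply/logn_coprime; rewrite coprime2n.
by rewrite addn0 mulKn // expn_gt0.
Qed.

Lemma T_eq n k m : 3*n+1 = 2^k*m -> m %% 2 = 1 -> T n = m.
Proof.
move=> e h; rewrite /T e oddpartE //.
by move: h; rewrite modn2; case: (odd m).
Qed.

Lemma oddpart_odd x : 0 < x -> odd (oddpart x) /\ x = 2^(v2 x) * oddpart x.
Proof.
move=> x0; have [m cm e] := pfactor_coprime (isT : prime 2) x0.
rewrite /oddpart /v2; set k := logn 2 x in e *.
rewrite e mulnK ?expn_gt0 //.
by rewrite -coprime2n mulnC.
Qed.

Lemma odd_mod m : odd m -> m %% 2 = 1.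
Proof. by rewrite modn2 => ->. Qed.

Theorem proposition5p1 :
  (forall a : nat, produces11 (64 * a + 29)) /\
  (forall a : nat, produces11 (64 * a + 21) <-> oddpart (3 * a + 1) %% 8 = 3) /\
  (forall a : nat, produces11 (64 * a + 37) <-> odd a) /\
  (forall a : nat, produces11 (64 * a + 53) <-> a %% 4 = 1) /\
  (forall a r : nat, r \in [:: 5; 13; 45; 61] -> ~ produces11 (64 * a + r)).
Proof.
rewrite /produces11; split; [|split; [|split; [|split]]].
- move=> a; rewrite (@T_eq _ 3 (24*a+11)) /=; [|lia|lia].
  rewrite (@T_eq _ 1 (36*a+17)) /=; lia.
- move=> a; have h0 : 0 < 3*a+1 by rewrite addn1.
  have [om e] := oddpart_odd _ h0.
  have e6 : 3 * (64 * a + 21) + 1 = 2^(6 + v2 (3*a+1)) * oddpart (3*a+1).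
    by rewrite expnD -mulnA -e; lia.
  rewrite (T_eq _ _ _ e6 (odd_mod _ om)).
  move: om (odd_mod _ om) => _.
  set m := oddpart _ => om.
  split.
  + move=> [h1 h2].
    move: h2; rewrite (@T_eq _ 1 (6*(m%/4)+5)) /=; lia.
  + move=> h; have h1 : m %% 4 = 3 by lia.
    rewrite (@T_eq _ 1 (6*(m%/4)+5)) /=; lia.
- move=> a; rewrite (@T_eq _ 4 (12*a+7)) /=; [|lia|lia].
  rewrite (@T_eq _ 1 (18*a+11)) /=; [|lia|lia].
  have := modn2 a; case: (odd a) => /= ha; split => // H; [lia | exfalso; lia].
- move=> a; rewrite (@T_eq _ 5 (6*a+5)) /=; [|lia|lia].
  split.
  + move=> [h1 h2]; move: h2.
    rewrite (@T_eq _ 1 (18*(a%/2)+17)) /=; lia.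
  + move=> h; rewrite (@T_eq _ 1 (18*(a%/2)+17)) /=; lia.
- move=> a r; rewrite !inE => /or4P [/eqP-> | /eqP-> | /eqP-> | /eqP->].
  + rewrite (@T_eq _ 4 (12*a+1)) /=; lia.
  + rewrite (@T_eq _ 3 (24*a+5)) /=; lia.
  + rewrite (@T_eq _ 3 (24*a+17)) /=; lia.
  + rewrite (@T_eq _ 3 (24*a+23)) /=; [|lia|lia].
    rewrite (@T_eq _ 1 (36*a+35)) /=; lia.
Qed.
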